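(* In the setting described in the context, if $m\in S$ then $g_m\in\widetilde{I}$.
   Context: $\Phi$ is a commutative ring with unity $1\ne0$, regarded as a differential ring with the commuting derivations $\delta_1,\delta_2$ acting as zero. $S\subseteq\mathbb{N}$ is recursively enumerable and $M$ is a two-tape acyclic Minsky machine with states $q_0,\ldots,q_n$ ($q_0$ terminal) such that for every $x\in\mathbb{N}$, starting at configuration $[1,2^{2^x},0]$, $M$ reaches $[0,1,0]$ in finitely many steps if $x\in S$ and operates infinitely if $x\notin S$. Minsky machine conventions: two tapes infinite to the right with cells $0,1,2,\ldots$; cell $0$ contains $1$, all others $0$; a configuration $[i,a,b]$ means state $q_i$, head at cell $a$ of tape 1 and cell $b$ of tape 2. Commands are $q_i\varepsilon\sigma\to q_jT_\alpha T_\beta$ with $1\le i\le n$, $0\le j\le n$, $\varepsilon,\sigma\in\{0,1\}$, $\alpha,\beta\in\{-1,0,1\}$, $\alpha\ge0$ if $\varepsilon=1$, $\beta\ge0$ if $\sigma=1$, at most one per triple $(i,\varepsilon,\sigma)$; such a command applies to $[i,a,b]$ when ($\varepsilon=1$ iff $a=0$) and ($\sigma=1$ iff $b=0$), producing $[j,a+\alpha,b+\beta]$. Acyclic means no configuration recurs after a positive number of steps. $A=\Phi\{x_1,x_2,q_0,\ldots,q_n\}$ is the differential polynomial ring w.r.t. $\delta_1,\delta_2$ (polynomial ring in independent variables $\delta_1^a\delta_2^b(y)$, $y\in\{x_1,x_2,q_0,\ldots,q_n\}$, $\delta_1,\delta_2$ raising the corresponding exponent). $J$ is the differential ideal generated by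 $\delta_1(x_2),\delta_2(x_1)$, and $B=A/J$. For each command of $M$, $g(i,\varepsilon,\sigma)$ is the image in $B$ of $x_1^{\varepsilon}x_2^{\sigma}\delta_1^{1-\varepsilon}\delta_2^{1-\sigma}(q_i)-x_1^{\varepsilon}x_2^{\sigma}\delta_1^{1-\varepsilon+\alpha}\delta_2^{1-\sigma+\beta}(q_j)$; $\widetilde{I}$ is the differential ideal of $B$ generated by all $g(i,\varepsilon,\sigma)$; and $g_m$ is the image in $B$ of $x_1x_2\delta_1^{2^{2^m}}(q_1)-x_1x_2\delta_1(q_0)$. *)

(* Defs.v *)
From HB Require Import structures.
From mathcomp Require Import all_boot all_algebra.
From mathcomp Require Import finmap.
From mathcomp.multinomials Require Import monalg.

Set Implicit Arguments.
Unset Strict Implicit.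
Unset Printing Implicit Defensive.

Import GRing.Theory.
Local Open Scope ring_scope.

(* A machine with states q_0..q_n is given by n and a partial command  *)
(* table  cmd i eps sig = Some (j, alpha, beta)  encoding the command  *)
(* q_i eps sig -> q_j T_alpha T_beta  (at most one per triple, since   *)
(* cmd is a function).                                                 *)

Definition minsky_cmd := nat -> bool -> bool -> option (nat * int * int).

Definition minsky_wf (n : nat) (cmd : minsky_cmd) : Prop :=
  forall i e s j al be, cmd i e s = Some (j, al, be) ->
    [/\ (1 <= i <= n)%N, (j <= n)%N,
        -1 <= al <= 1, -1 <= be <= 1 &
        ((e -> 0 <= al) /\ (s -> 0 <= be))].

Definition config := (nat * nat * nat)%type.

Definition mstep (cmd : minsky_cmd) (c : config) : option config :=
  let: (i, a, b) := c in
  match cmd i (a == 0)%N (b == 0)%N with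
  | Some (j, al, be) => Some (j, absz (a%:Z + al), absz (b%:Z + be))
  | None => None
  end.

Fixpoint mrun (cmd : minsky_cmd) (k : nat) (c : config) : option config :=
  match k with
  | 0 => Some c
  | k'.+1 => obind (mstep cmd) (mrun cmd k' c)
  end.

Definition macyclic (cmd : minsky_cmd) : Prop :=
  forall (c : config) (k : nat), (0 < k)%N -> mrun cmd k c <> Some c.

Definition mreaches (cmd : minsky_cmd) (c c' : config) : Prop :=
  exists k, mrun cmd k c = Some c'.

Definition mdiverges (cmd : minsky_cmd) (c : config) : Prop :=
  forall k, mrun cmd k c <> None.

(* The differential polynomial ring A = Phi{x1, x2, q_0, ..., q_n}.     *)
(* Differential indeterminates: inl false = x1, inl true = x2,          *)
(* inr i = q_i.  The polynomial variable (y, a, b) stands for           *)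
(* delta1^a delta2^b (y).                                               *)

Definition dind (n : nat) := (bool + 'I_n.+1)%type.
Definition dvarT (n : nat) := (dind n * nat * nat)%type.

Definition dpoly (Phi : comNzRingType) (n : nat) := {malg Phi[{cmonom dvarT n}]}.

Definition X1 {n} : dind n := inl false.
Definition X2 {n} : dind n := inl true.
Definition Q {n} (i : nat) : dind n := inr (inord i).

Definition dv {Phi : comNzRingType} {n : nat} (y : dind n) (a b : nat)
  : dpoly Phi n := << ucm ((y, a, b) : dvarT n) >>.

Definition sh1 {n} (v : dvarT n) : dvarT n := (v.1.1, v.1.2.+1, v.2).
Definition sh2 {n} (v : dvarT n) : dvarT n := (v.1.1, v.1.2, v.2.+1).

Definition dmonom {Phi : comNzRingType} {n : nat} (sh : dvarT n -> dvarT n)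
  (m : {cmonom dvarT n}) : dpoly Phi n :=
  \sum_(v <- finsupp m)
     (m v)%:R * << divcm m (ucm v) >> * << ucm (sh v) >>.

(* the Phi-linear derivation determined by delta(y_v) = y_(sh v),
   delta(Phi) = 0 *)
Definition dder {Phi : comNzRingType} {n : nat} (sh : dvarT n -> dvarT n)
  (p : dpoly Phi n) : dpoly Phi n :=
  \sum_(m <- msupp p) p@_m *: dmonom sh m.

Definition delta1 {Phi : comNzRingType} {n : nat} := @dder Phi n sh1.
Definition delta2 {Phi : comNzRingType} {n : nat} := @dder Phi n sh2.

Inductive dideal {Phi : comNzRingType} {n : nat} (G : dpoly Phi n -> Prop)
  : dpoly Phi n -> Prop :=
| dideal_gen g : G g -> dideal G g
| dideal_0 : dideal G 0
| dideal_add p q : dideal G p -> dideal G q -> dideal G (p + q)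
| dideal_mul r p : dideal G p -> dideal G (r * p)
| dideal_d1 p : dideal G p -> dideal G (delta1 p)
| dideal_d2 p : dideal G p -> dideal G (delta2 p).

(* lift to A of the generator g(i, eps, sig) attached to the command
   q_i eps sig -> q_j T_al T_be *)
Definition gcmd {Phi : comNzRingType} {n : nat} (i : nat) (e s : bool)
  (j : nat) (al be : int) : dpoly Phi n :=
  (dv X1 0 0) ^+ e * (dv X2 0 0) ^+ s * dv (Q i) (1 - e) (1 - s)
  - (dv X1 0 0) ^+ e * (dv X2 0 0) ^+ s
      * dv (Q j) (absz (1 - e%:Z + al)) (absz (1 - s%:Z + be)).

(* generators of J (delta1 x2, delta2 x1) together with the lifts of
   all g(i, eps, sig).  The preimage in A of the differential ideal
   I~ of B = A/J is the differential ideal of A generated by these. *)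
Definition Igens {Phi : comNzRingType} {n : nat} (cmd : minsky_cmd)
  (p : dpoly Phi n) : Prop :=
  p = dv X2 1 0 \/ p = dv X1 0 1 \/
  exists i e s j al be, cmd i e s = Some (j, al, be) /\ p = gcmd i e s j al be.

Definition gm {Phi : comNzRingType} {n : nat} (m : nat) : dpoly Phi n :=
  dv X1 0 0 * dv X2 0 0 * dv (Q 1) (2 ^ (2 ^ m)) 0
  - dv X1 0 0 * dv X2 0 0 * dv (Q 0) 1 0.

(* Main.v *)
Require Import Defs.
From HB Require Import structures.
From mathcomp Require Import all_boot all_algebra.
From mathcomp Require Import finmap.
From mathcomp.multinomials Require Import monalg.
From mathcomp Require Import ring zify.
Set Implicit Arguments. Unset Strict Implicit. Unset Printing Implicit Defensive.
Import GRing.Theory.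
Local Open Scope ring_scope.


Lemma UU (K : monomType) (R : nzRingType) (k1 k2 : K) :
  (<< k1 >> : {malg R[K]}) * << k2 >> = << mmul k1 k2 >>.
Proof. by rewrite malgM_def fgmulUU mulr1. Qed.
Lemma divUU (I : choiceType) (u w : I) : u != w ->
  divcm (mmul (ucm u) (ucm w)) (ucm u) = ucm w.
Proof.
move=> uw; apply/eqP/cmP => i; rewrite divcmE !cmM !cmU.
by case: (u =P i) => [e|_]; case: (w =P i) => [e'|_].
Qed.
Lemma divUU' (I : choiceType) (u w : I) : u != w ->
  divcm (mmul (ucm u) (ucm w)) (ucm w) = ucm u.
Proof.
move=> uw; apply/eqP/cmP => i; rewrite divcmE !cmM !cmU.
by case: (u =P i) => [e|_]; case: (w =P i) => [e'|_].
Qed.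
Lemma aux1 (R : comNzRingType) (A B C D : R) :
  1 * (1 * A * B + 1 * C * D) = B * A + C * D.
Proof. by rewrite !mul1r (mulrC A). Qed.
Section D.
Variables (Phi : comNzRingType) (n : nat) (sh : dvarT n -> dvarT n).

Lemma dderE (p : dpoly Phi n) :
  dder sh p = mmap (@malgC _ Phi) (@dmonom Phi n sh) p.
Proof. by rewrite /dder mmapE; apply: eq_bigr => m _; rewrite mul_malgC. Qed.

Lemma dderB (p q : dpoly Phi n) : dder sh (p - q) = dder sh p - dder sh q.
Proof. by rewrite !dderE mmapB. Qed.

Lemma dderD (p q : dpoly Phi n) : dder sh (p + q) = dder sh p + dder sh q.
Proof. by rewrite !dderE mmapD. Qed.

Lemma dderU (v : dvarT n) :
  dder sh (<< ucm v >> : dpoly Phi n) = << ucm (sh v) >>.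
Proof.
rewrite dderE mmapU /dmonom mdomU big_seq_fset1 cmUU.
have -> : divcm (ucm v) (ucm v) = mone.
  by apply/eqP/cmP => i; rewrite divcmE cm1 subnn.
by rewrite !mul1r.
Qed.


Lemma dderUU (u w : dvarT n) : u != w ->
  dder sh ((<< ucm u >> : dpoly Phi n) * << ucm w >>) =
  << ucm (sh u) >> * << ucm w >> + << ucm u >> * << ucm (sh w) >>.
Proof.
move=> uw.
have h : (<< ucm u >> : dpoly Phi n) * << ucm w >> = << mmul (ucm u) (ucm w) >>.
  exact: UU.
transitivity (dder sh (<< mmul (ucm u) (ucm w) >> : dpoly Phi n)); first exact: (congr1 (dder sh) h).
rewrite dderE mmapU /dmonom mdomD !mdomU.
rewrite big_fsetU1; last by rewrite inE.
rewrite big_seq_fset1.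
rewrite divUU // divUU' //.
rewrite !cmM !cmUU !cmU (negbTE uw) eq_sym (negbTE uw) /=.
rewrite addn0 add0n mulr1n.
rewrite mpolyC1E; exact: aux1.
Qed.
End D.

Lemma aux_sub (R : comNzRingType) (p q : R) : p + (-1) * q = p - q.
Proof. by rewrite mulN1r. Qed.
Lemma aux3 (R : comNzRingType) (G x A B A' B' : R) :
  (G * A + x * A' - (G * B + x * B')) - (A - B) * G = x * A' - x * B'.
Proof. ring. Qed.
Lemma aux_tr (R : comNzRingType) (a b c : R) : (a - b) + (b - c) = a - c.
Proof. ring. Qed.

Lemma auxTT (R : comNzRingType) (x y A B : R) :
  x ^+ 1 * y ^+ 1 * A - x ^+ 1 * y ^+ 1 * B = x * y * A - x * y * B.
Proof. by rewrite !expr1. Qed.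
Lemma auxTF (R : comNzRingType) (x y A B : R) :
  x ^+ 1 * y ^+ 0 * A - x ^+ 1 * y ^+ 0 * B = x * A - x * B.
Proof. by rewrite !expr1 !expr0 !mulr1. Qed.
Lemma auxFT (R : comNzRingType) (x y A B : R) :
  x ^+ 0 * y ^+ 1 * A - x ^+ 0 * y ^+ 1 * B = y * A - y * B.
Proof. by rewrite !expr1 !expr0 !mul1r. Qed.
Lemma auxFF (R : comNzRingType) (x y A B : R) :
  x ^+ 0 * y ^+ 0 * A - x ^+ 0 * y ^+ 0 * B = A - B.
Proof. by rewrite !expr0 !mul1r. Qed.
Lemma auxM1 (R : comNzRingType) (x y A B : R) :
  y * (x * A - x * B) = x * y * A - x * y * B.
Proof. ring. Qed.
Lemma auxM2 (R : comNzRingType) (x y A B : R) :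
  x * (y * A - y * B) = x * y * A - x * y * B.
Proof. ring. Qed.
Lemma auxM3 (R : comNzRingType) (x y A B : R) :
  x * y * (A - B) = x * y * A - x * y * B.
Proof. ring. Qed.
Section Main.
Variables (Phi : comNzRingType) (n : nat) (cmd : minsky_cmd).
Local Notation Id := (@dideal Phi n (Igens cmd)).

Lemma Id_eq p q : p = q -> Id p -> Id q. Proof. by move->. Qed.

Lemma Id_sub p q : Id p -> Id q -> Id (p - q).
Proof.
move=> hp hq; apply: (Id_eq _ (dideal_add hp (dideal_mul (-1) hq))).
exact: aux_sub.
Qed.

Lemma iter_dderU sh k (v : dvarT n) :
  iter k (dder sh) (<< ucm v >> : dpoly Phi n) = << ucm (iter k sh v) >>.
Proof. elim: k => [//|k IH] /=; rewrite IH; exact: dderU. Qed.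

Lemma iter_dderB sh k (p q : dpoly Phi n) :
  iter k (dder sh) (p - q) = iter k (dder sh) p - iter k (dder sh) q.
Proof. elim: k => [//|k IH] /=; rewrite IH; exact: dderB. Qed.

Lemma Id_iter sh (Hcl : forall p, Id p -> Id (dder sh p)) k p :
  Id p -> Id (iter k (dder sh) p).
Proof. elim: k => [//|k IH] hp /=; exact: Hcl (IH hp). Qed.

Lemma lieb sh (Hcl : forall p, Id p -> Id (dder sh p)) (xv v w : dvarT n)
  (Hg : Id << ucm (sh xv) >>) (Hv : forall k, xv != iter k sh v)
  (Hw : forall k, xv != iter k sh w) k :
  Id (<< ucm xv >> * << ucm v >> - << ucm xv >> * << ucm w >>) ->
  Id (<< ucm xv >> * << ucm (iter k sh v) >> - << ucm xv >> * << ucm (iter k sh w) >>).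
Proof.
move=> h0; elim: k => [//|k IH].
have h1 := Hcl _ IH.
have h2 := dideal_mul (<< ucm (iter k sh v) >> - << ucm (iter k sh w) >>) Hg.
have E := etrans (dderB sh _ _) (congr2 (fun a b => a - b)
   (@dderUU Phi n sh _ _ (Hv k)) (@dderUU Phi n sh _ _ (Hw k))).
apply: (Id_eq _ (Id_sub (Id_eq E h1) h2)).
exact: aux3.
Qed.

Definition PP (c : config) : dpoly Phi n :=
  let: (i, a, b) := c in dv X1 0 0 * dv X2 0 0 * dv (Q i) a b.

Lemma iter_sh1 k (y : dind n) a b : iter k sh1 ((y, a, b) : dvarT n) = (y, a + k, b)%N.
Proof. by elim: k => [|k IH] /=; rewrite ?addn0 // IH /sh1 /= addnS. Qed.
Lemma iter_sh2 k (y : dind n) a b : iter k sh2 ((y, a, b) : dvarT n) = (y, a, b + k)%N.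
Proof. by elim: k => [|k IH] /=; rewrite ?addn0 // IH /sh2 /= addnS. Qed.

Lemma d1cl p : Id p -> Id (dder sh1 p). Proof. exact: dideal_d1. Qed.
Lemma d2cl p : Id p -> Id (dder sh2 p). Proof. exact: dideal_d2. Qed.
Lemma g1 : Id (dv X1 0 1). Proof. by apply: dideal_gen; right; left. Qed.
Lemma g2 : Id (dv X2 1 0). Proof. by apply: dideal_gen; left. Qed.

Lemma genG i e s j al be : cmd i e s = Some (j, al, be) -> Id (gcmd i e s j al be).
Proof. by move=> E; apply: dideal_gen; right; right; exists i, e, s, j, al, be. Qed.

Lemma lieb2 k i j a b a2 b2 :
  Id (dv X1 0 0 * dv (Q i) a b - dv X1 0 0 * dv (Q j) a2 b2) ->
  Id (dv X1 0 0 * dv (Q i) a (b + k) - dv X1 0 0 * dv (Q j) a2 (b2 + k)).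
Proof.
move=> h.
have Hv : forall y a b (l : nat), ((X1, 0, 0)%N : dvarT n) != iter l sh2 ((Q y, a, b) : dvarT n).
  by move=> y a' b' l; rewrite iter_sh2.
have := @lieb sh2 d2cl (X1, 0, 0)%N (Q i, a, b) (Q j, a2, b2) g1 (Hv i a b) (Hv j a2 b2) k h.
by rewrite !iter_sh2.
Qed.

Lemma lieb1 k i j a b a2 b2 :
  Id (dv X2 0 0 * dv (Q i) a b - dv X2 0 0 * dv (Q j) a2 b2) ->
  Id (dv X2 0 0 * dv (Q i) (a + k) b - dv X2 0 0 * dv (Q j) (a2 + k) b2).
Proof.
move=> h.
have Hv : forall y a b (l : nat), ((X2, 0, 0)%N : dvarT n) != iter l sh1 ((Q y, a, b) : dvarT n).
  by move=> y a' b' l; rewrite iter_sh1.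
have := @lieb sh1 d1cl (X2, 0, 0)%N (Q i, a, b) (Q j, a2, b2) g2 (Hv i a b) (Hv j a2 b2) k h.
by rewrite !iter_sh1.
Qed.

Lemma iter1_dv k y a b : iter k (dder sh1) (dv y a b : dpoly Phi n) = dv y (a + k) b.
Proof. by rewrite /dv iter_dderU iter_sh1. Qed.
Lemma iter2_dv k y a b : iter k (dder sh2) (dv y a b : dpoly Phi n) = dv y a (b + k).
Proof. by rewrite /dv iter_dderU iter_sh2. Qed.

Lemma iterFF k1 k2 i j a b a2 b2 :
  Id (dv (Q i) a b - dv (Q j) a2 b2) ->
  Id (dv (Q i) (a + k1) (b + k2) - dv (Q j) (a2 + k1) (b2 + k2)).
Proof.
move=> h.
have h2 := Id_iter d2cl k2 h.
have e2 := etrans (iter_dderB _ _ _ _) (congr2 (fun x y => x - y) (iter2_dv k2 (Q i) a b) (iter2_dv k2 (Q j) a2 b2)).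
have h3 := Id_iter d1cl k1 (Id_eq e2 h2).
have e1 := etrans (iter_dderB _ _ _ _) (congr2 (fun x y => x - y) (iter1_dv k1 (Q i) a (b + k2)) (iter1_dv k1 (Q j) a2 (b2 + k2))).
exact: Id_eq e1 h3.
Qed.

Lemma step (Hwf : minsky_wf n cmd) c c' : mstep cmd c = Some c' -> Id (PP c - PP c').
Proof.
case: c => [[i a] b] /=.
case E: (cmd i _ _) => [[[j al] be]|] // [<-].
have [_ _ /andP[hal1 hal2] /andP[hbe1 hbe2] [he hs]] := Hwf _ _ _ _ _ _ E.
case: a E he => [|a0] E he; case: b E hs => [|b0] E hs.
- have hG : Id (gcmd i true true j al be) := genG E.
  apply: (Id_eq _ hG); rewrite /gcmd.
  have -> : absz (1 - (nat_of_bool true)%:Z + al) = absz (0%:Z + al) by lia.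
  have -> : absz (1 - (nat_of_bool true)%:Z + be) = absz (0%:Z + be) by lia.
  exact: auxTT.
- have hG : Id (gcmd i true false j al be) := genG E.
  have h1 : Id (dv X1 0 0 * dv (Q i) 0 1 - dv X1 0 0 * dv (Q j) (absz (0%:Z + al)) (absz (1 + be))).
    apply: (Id_eq _ hG); rewrite /gcmd.
    have -> : absz (1 - (nat_of_bool true)%:Z + al) = absz (0%:Z + al) by lia.
    have -> : absz (1 - (nat_of_bool false)%:Z + be) = absz (1 + be) by lia.
    exact: auxTF.
  have h2 := lieb2 b0 h1.
  have e1 : (1 + b0 = b0.+1)%N by lia.
  have e2 : (absz (1 + be)%R + b0 = absz ((b0.+1)%:Z + be)%R)%N by lia.
  rewrite e1 e2 in h2.
  apply: (Id_eq _ (dideal_mul (dv X2 0 0) h2)).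
  exact: auxM1.
- have hG : Id (gcmd i false true j al be) := genG E.
  have h1 : Id (dv X2 0 0 * dv (Q i) 1 0 - dv X2 0 0 * dv (Q j) (absz (1 + al)) (absz (0%:Z + be))).
    apply: (Id_eq _ hG); rewrite /gcmd.
    have -> : absz (1 - (nat_of_bool false)%:Z + al) = absz (1 + al) by lia.
    have -> : absz (1 - (nat_of_bool true)%:Z + be) = absz (0%:Z + be) by lia.
    exact: auxFT.
  have h2 := lieb1 a0 h1.
  have e1 : (1 + a0 = a0.+1)%N by lia.
  have e2 : (absz (1 + al)%R + a0 = absz ((a0.+1)%:Z + al)%R)%N by lia.
  rewrite e1 e2 in h2.
  apply: (Id_eq _ (dideal_mul (dv X1 0 0) h2)).
  exact: auxM2.
- have hG : Id (gcmd i false false j al be) := genG E.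
  have h1 : Id (dv (Q i) 1 1 - dv (Q j) (absz (1 + al)) (absz (1 + be))).
    apply: (Id_eq _ hG); rewrite /gcmd.
    have -> : absz (1 - (nat_of_bool false)%:Z + al) = absz (1 + al) by lia.
    have -> : absz (1 - (nat_of_bool false)%:Z + be) = absz (1 + be) by lia.
    exact: auxFF.
  have h2 := iterFF a0 b0 h1.
  have e1 : (1 + a0 = a0.+1)%N by lia.
  have e1' : (1 + b0 = b0.+1)%N by lia.
  have e2 : (absz (1 + al)%R + a0 = absz ((a0.+1)%:Z + al)%R)%N by lia.
  have e2' : (absz (1 + be)%R + b0 = absz ((b0.+1)%:Z + be)%R)%N by lia.
  rewrite e1 e1' e2 e2' in h2.
  apply: (Id_eq _ (dideal_mul (dv X1 0 0 * dv X2 0 0) h2)).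
  exact: auxM3.
Qed.

Lemma run (Hwf : minsky_wf n cmd) k c c' : mrun cmd k c = Some c' -> Id (PP c - PP c').
Proof.
elim: k c' => [|k IH] c' /=.
  move=> [<-]; apply: (Id_eq _ (@dideal_0 _ _ _)); by rewrite subrr.
case H: (mrun cmd k c) => [c1|] //= Hs.
apply: (Id_eq _ (dideal_add (IH _ H) (step Hwf Hs))).
exact: aux_tr.
Qed.
End Main.

Theorem corollary2 (Phi : comNzRingType) (S : nat -> Prop)
  (n : nat) (cmd : minsky_cmd)
  (Hwf : minsky_wf n cmd) (Hacyc : macyclic cmd)
  (HS_in : forall x, S x -> mreaches cmd (1, 2 ^ (2 ^ x), 0)%N (0, 1, 0)%N)
  (HS_out : forall x, ~ S x -> mdiverges cmd (1, 2 ^ (2 ^ x), 0)%N)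
  (m : nat) (Hm : S m) :
  dideal (Igens cmd) (gm m : dpoly Phi n).
Proof.
have [k Hk] := HS_in m Hm.
exact: (@run Phi n cmd Hwf k _ _ Hk).
Qed.
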